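(* For every $i=1,\dots,n$ and every polygon in $\mathcal P_n$, the derivative of the perimeter $F$ in the direction of $\xi_i$ vanishes: $\xi_i(F)=0$. Thus the distribution $\mathcal D_n$ is tangent to the level hypersurfaces of $F$.
   Context: Let $n\ge3$ and let $\mathcal P_n$ be the $2n$-dimensional manifold of convex $n$-gons in $\mathbb R^2$. A polygon is encoded by the lines of its sides, cyclically ordered counterclockwise (indices mod $n$): $L_i=\{(x,y): x\cos\alpha_i+y\sin\alpha_i=p_i\}$, where $(\cos\alpha_i,\sin\alpha_i)$ is the outer unit normal of the $i$-th side. Thus $(\alpha_1,p_1,\dots,\alpha_n,p_n)$ are local coordinates, with $0<\alpha_{i+1}-\alpha_i<\pi$ (mod $2\pi$) and total turning $2\pi$. The positive side of $L_i$ is the open half-plane into which its outer normal points; the negative side is the other one, which contains the polygon. For each $i$, let $K_i$ be the circle tangent to the three lines $L_{i-1},L_i,L_{i+1}$ that lies on the negative sides of $L_{i-1}$ and $L_{i+1}$ and on the positive side of $L_i$. Let $C_i$ be its tangency point with $L_i$. Let $\xi_i$ be the vector field on $\mathcal P_n$ given by the infinitesimal counterclockwise rotation of the line $L_i$ about the point $C_i$, all other sides fixed. In coordinates, $\xi_i=\partial_{\alpha_i}+\det\big((\cos\alpha_i,\sin\alpha_i),C_i\big)\,\partial_{p_i}$. The distribution $\mathcal D_n$ is spanned by $\xi_1,\dots,\xi_n$. $F:\mathcal P_n\to\mathbb R$ is the perimeter. *)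

(* Defs.v *)
From Stdlib Require Import Reals Lra Lia ZArith Arith.
From Coquelicot Require Import Coquelicot.
Open Scope R_scope.

(* A polygon with n sides is encoded by the coordinates (alpha_i, p_i),
   i = 0..n-1 (values of the functions at indices >= n are irrelevant).
   Side i lies on L_i = {(x,y) | x cos alpha_i + y sin alpha_i = p_i},
   with outer unit normal (cos alpha_i, sin alpha_i). *)

Definition nxt (n i : nat) : nat := Nat.modulo (S i) n.
Definition prv (n i : nat) : nat := Nat.modulo (i + n - 1) n.

Fixpoint sumR (n : nat) (f : nat -> R) : R :=
  match n with
  | O => 0
  | S m => sumR m f + f m
  end.

(* Vertex V_i = L_i ∩ L_{i+1} (Cramer's rule; the determinant is
   sin(alpha_{i+1} - alpha_i), nonzero on P_n). *)
Definition vdet (n : nat) (a : nat -> R) (i : nat) : R :=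
  cos (a i) * sin (a (nxt n i)) - sin (a i) * cos (a (nxt n i)).
Definition vx (n : nat) (a p : nat -> R) (i : nat) : R :=
  (p i * sin (a (nxt n i)) - p (nxt n i) * sin (a i)) / vdet n a i.
Definition vy (n : nat) (a p : nat -> R) (i : nat) : R :=
  (cos (a i) * p (nxt n i) - cos (a (nxt n i)) * p i) / vdet n a i.

Definition side_length (n : nat) (a p : nat -> R) (i : nat) : R :=
  sqrt ((vx n a p i - vx n a p (prv n i))^2 + (vy n a p i - vy n a p (prv n i))^2).

(* Signed length of side i along the counterclockwise unit tangent
   (-sin alpha_i, cos alpha_i). *)
Definition signed_side (n : nat) (a p : nat -> R) (i : nat) : R :=
  (vx n a p i - vx n a p (prv n i)) * (- sin (a i))
  + (vy n a p i - vy n a p (prv n i)) * cos (a i).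

Definition perimeter (n : nat) (a p : nat -> R) : R :=
  sumR n (fun i => side_length n a p i).

(* (alpha, p) are the coordinates of a convex n-gon in P_n:
   each turning angle alpha_{i+1}-alpha_i is, mod 2 pi, in (0, pi),
   the total turning is 2 pi, and every side has positive length. *)
Definition is_convex_ngon (n : nat) (a p : nat -> R) : Prop :=
  (exists d : nat -> R,
      (forall i, (i < n)%nat ->
         0 < d i < PI /\ exists k : Z, a (nxt n i) - a i = d i + 2 * PI * IZR k)
      /\ sumR n d = 2 * PI)
  /\ (forall i, (i < n)%nat -> 0 < signed_side n a p i).

Definition sdist (a p : nat -> R) (j : nat) (x y : R) : R :=
  x * cos (a j) + y * sin (a j) - p j.

(* (cx, cy) is the tangency point C_i of L_i with the circle K_i, which is
   tangent to L_{i-1}, L_i, L_{i+1}, lies on the positive side of L_i and on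
   the negative sides of L_{i-1}, L_{i+1}. *)
Definition is_tangency_point (n : nat) (a p : nat -> R) (i : nat) (cx cy : R) : Prop :=
  exists ox oy r : R,
    0 < r
    /\ sdist a p i ox oy = r
    /\ sdist a p (prv n i) ox oy = - r
    /\ sdist a p (nxt n i) ox oy = - r
    /\ cx = ox - r * cos (a i)
    /\ cy = oy - r * sin (a i).

Definition bump (f : nat -> R) (i : nat) (t : R) : nat -> R :=
  fun j => if Nat.eqb j i then f j + t else f j.

(* The p_i-component of xi_i: det((cos alpha_i, sin alpha_i), C_i). *)
Definition xi_coef (a : nat -> R) (i : nat) (cx cy : R) : R :=
  cos (a i) * cy - sin (a i) * cx.

(* Main.v *)
Require Import Defs.
From Stdlib Require Import Reals Lra Lia ZArith Arith Nsatz FunctionalExtensionality.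
From Coquelicot Require Import Coquelicot.
Open Scope R_scope.
Lemma nxt_spec n k : (k < n)%nat -> ((S k < n)%nat /\ nxt n k = S k) \/ (S k = n /\ nxt n k = 0%nat).
Proof. intros H. unfold nxt. destruct (Nat.eq_dec (S k) n) as [E|E].
  - right. split; auto. rewrite E. apply Nat.mod_same. lia.
  - left. split. lia. apply Nat.mod_small. lia. Qed.

Lemma prv_spec n k : (k < n)%nat -> ((0 < k)%nat /\ prv n k = (k-1)%nat) \/ (k = 0%nat /\ prv n k = (n-1)%nat).
Proof. intros H. unfold prv. destruct k as [|k].
  - right. split; auto. apply Nat.mod_small. lia.
  - left. split. lia. replace (S k + n - 1)%nat with (k + 1 * n)%nat by lia.
    rewrite Nat.mod_add by lia. rewrite Nat.mod_small; lia. Qed.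

Lemma nxt_lt n k : (k < n)%nat -> (nxt n k < n)%nat.
Proof. intros H; destruct (nxt_spec n k H); lia. Qed.
Lemma prv_lt n k : (k < n)%nat -> (prv n k < n)%nat.
Proof. intros H; destruct (prv_spec n k H); lia. Qed.
Lemma nxt_prv n k : (k < n)%nat -> nxt n (prv n k) = k.
Proof. intros H. pose proof (prv_lt n k H). destruct (prv_spec n k H) as [[? E]|[? E]];
  destruct (nxt_spec n (prv n k) H0) as [[? F]|[? F]]; lia. Qed.
Lemma prv_nxt n k : (k < n)%nat -> prv n (nxt n k) = k.
Proof. intros H. pose proof (nxt_lt n k H). destruct (nxt_spec n k H) as [[? E]|[? E]];
  destruct (prv_spec n (nxt n k) H0) as [[? F]|[? F]]; lia. Qed.
Lemma nxt_inj n k l : (k < n)%nat -> (l < n)%nat -> nxt n k = nxt n l -> k = l.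
Proof. intros Hk Hl E. rewrite <- (prv_nxt n k Hk), <- (prv_nxt n l Hl), E. reflexivity. Qed.
Lemma prv_inj n k l : (k < n)%nat -> (l < n)%nat -> prv n k = prv n l -> k = l.
Proof. intros Hk Hl E. rewrite <- (nxt_prv n k Hk), <- (nxt_prv n l Hl), E. reflexivity. Qed.
Lemma nxt_neq n k : (2 <= n)%nat -> (k < n)%nat -> nxt n k <> k.
Proof. intros H2 H. destruct (nxt_spec n k H) as [[? E]|[? E]]; lia. Qed.
Lemma nxt_nxt_neq n k : (3 <= n)%nat -> (k < n)%nat -> nxt n (nxt n k) <> k.
Proof. intros H3 H. pose proof (nxt_lt n k H). destruct (nxt_spec n k H) as [[? E]|[? E]];
  destruct (nxt_spec n (nxt n k) H0) as [[? F]|[? F]]; lia. Qed.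
Lemma sumR_ext n f g : (forall j, (j < n)%nat -> f j = g j) -> sumR n f = sumR n g.
Proof. induction n; intros H; simpl; auto. rewrite IHn by (intros; apply H; lia). rewrite H by lia. auto. Qed.

Lemma sumR_zero n f : (forall j, (j < n)%nat -> f j = 0) -> sumR n f = 0.
Proof. induction n; intros H; simpl; auto. rewrite IHn by (intros; apply H; lia). rewrite H by lia. ring. Qed.

Lemma sumR_pick n g k : (k < n)%nat -> sumR n g = g k + sumR n (fun j => if Nat.eqb j k then 0 else g j).
Proof. induction n; intros H; [lia|]. simpl. destruct (Nat.eq_dec k n) as [->|E].
  - rewrite Nat.eqb_refl. rewrite (sumR_ext n (fun j => if Nat.eqb j n then 0 else g j) g). ring.
    intros j Hj. destruct (Nat.eqb_spec j n); [lia|auto].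
  - rewrite (IHn ltac:(lia)). destruct (Nat.eqb_spec n k); [lia|]. ring. Qed.

Lemma sumR_three n g k1 k2 k3 : (k1 < n)%nat -> (k2 < n)%nat -> (k3 < n)%nat ->
  k1 <> k2 -> k1 <> k3 -> k2 <> k3 ->
  (forall j, (j < n)%nat -> j <> k1 -> j <> k2 -> j <> k3 -> g j = 0) ->
  sumR n g = g k1 + g k2 + g k3.
Proof. intros h1 h2 h3 d12 d13 d23 H.
  rewrite (sumR_pick n g k1 h1), (sumR_pick n _ k2 h2), (sumR_pick n _ k3 h3).
  rewrite sumR_zero.
  - destruct (Nat.eqb_spec k2 k1); [lia|]. destruct (Nat.eqb_spec k3 k2); [lia|].
    destruct (Nat.eqb_spec k3 k1); [lia|]. ring.
  - intros j Hj. destruct (Nat.eqb_spec j k3); auto. destruct (Nat.eqb_spec j k2); auto.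
    destruct (Nat.eqb_spec j k1); auto. Qed.

Lemma is_derive_sumR n (f : R -> nat -> R) df x :
  (forall j, (j < n)%nat -> is_derive (fun t => f t j) x (df j)) ->
  is_derive (fun t => sumR n (f t)) x (sumR n df).
Proof. induction n; intros H; simpl.
  - exact (@is_derive_const R_AbsRing R_NormedModule 0 x).
  - apply (is_derive_plus (fun t => sumR n (f t)) (fun t => f t n)).
    apply IHn; intros; apply H; lia. apply H; lia. Qed.

Lemma is_derive_val (f : R -> R) x l l' : is_derive f x l -> l = l' -> is_derive f x l'.
Proof. intros H ->; exact H. Qed.

Lemma dminus (f g : R -> R) x df dg : is_derive f x df -> is_derive g x dg ->
  is_derive (fun t => f t - g t) x (df - dg).
Proof. intros A B. exact (@is_derive_minus R_AbsRing R_NormedModule f g x df dg A B). Qed.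
Lemma dplus (f g : R -> R) x df dg : is_derive f x df -> is_derive g x dg ->
  is_derive (fun t => f t + g t) x (df + dg).
Proof. intros A B. exact (@is_derive_plus R_AbsRing R_NormedModule f g x df dg A B). Qed.

Lemma side_deriv (X1 Y1 X2 Y2 : R -> R) dX1 dY1 dX2 dY2 th s :
  is_derive X1 0 dX1 -> is_derive Y1 0 dY1 -> is_derive X2 0 dX2 -> is_derive Y2 0 dY2 ->
  0 < s -> X1 0 - X2 0 = - s * sin th -> Y1 0 - Y2 0 = s * cos th ->
  is_derive (fun t => sqrt ((X1 t - X2 t)^2 + (Y1 t - Y2 t)^2)) 0
     (- sin th * (dX1 - dX2) + cos th * (dY1 - dY2)).
Proof. intros h1 h2 h3 h4 hs ex ey.
  assert (G : (X1 0 - X2 0)^2 + (Y1 0 - Y2 0)^2 = s^2).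
  { rewrite ex, ey. pose proof (sin2_cos2 th). unfold Rsqr in H. nra. }
  assert (Hg := dplus _ _ _ _ _ (is_derive_pow _ 2 _ _ (dminus _ _ _ _ _ h1 h3))
                                (is_derive_pow _ 2 _ _ (dminus _ _ _ _ _ h2 h4))).
  pose proof (is_derive_sqrt _ _ _ Hg) as Hs. cbv beta in Hs.
  specialize (Hs ltac:(rewrite G; nra)). rewrite G in Hs.
  replace (sqrt (s^2)) with s in Hs by (rewrite sqrt_pow2; lra).
  eapply is_derive_val. apply Hs.
  rewrite ex, ey. simpl. field. lra.
Qed.

Lemma pyth_fix (L R0 k den : R) (x : R) : x = 1 -> den <> 0 ->
  L - R0 = k * (1 - x) / den -> L = R0.
Proof. intros -> Hd H. replace (k*(1-1)/den) with 0 in H by (field; auto). lra. Qed.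

Lemma vA_x (ca sa cb sb P Q c : R) : ca^2+sa^2=1 -> cb*sa - sb*ca <> 0 ->
  ((Q*ca - c*sb)*(cb*sa - sb*ca) - (Q*sa - P*sb)*(cb*ca+sb*sa))/(cb*sa - sb*ca)^2
  = -sb * ((c*(cb*sa - sb*ca) + Q - P*(cb*ca+sb*sa))/(cb*sa - sb*ca)^2).
Proof. intros h hE. apply (pyth_fix _ _ (Q*sb) ((cb*sa - sb*ca)^2) (ca^2+sa^2)); [exact h | apply pow_nonzero; exact hE |].
  field; auto. Qed.
Lemma vA_y (ca sa cb sb P Q c : R) : ca^2+sa^2=1 -> cb*sa - sb*ca <> 0 ->
  ((cb*c + sa*Q)*(cb*sa - sb*ca) - (cb*P - ca*Q)*(cb*ca+sb*sa))/(cb*sa - sb*ca)^2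
  = cb * ((c*(cb*sa - sb*ca) + Q - P*(cb*ca+sb*sa))/(cb*sa - sb*ca)^2).
Proof. intros h hE. apply (pyth_fix _ _ (-Q*cb) ((cb*sa - sb*ca)^2) (ca^2+sa^2)); [exact h | apply pow_nonzero; exact hE |].
  field; auto. Qed.
Lemma vB_x (ca sa cg sg P S c : R) : ca^2+sa^2=1 -> ca*sg - sa*cg <> 0 ->
  ((c*sg - S*ca)*(ca*sg - sa*cg) - (P*sg - S*sa)*(-sa*sg-ca*cg))/(ca*sg - sa*cg)^2
  = -sg * ((S - c*(ca*sg - sa*cg) - P*(cg*ca+sg*sa))/(ca*sg - sa*cg)^2).
Proof. intros h hE. apply (pyth_fix _ _ (S*sg) ((ca*sg - sa*cg)^2) (ca^2+sa^2)); [exact h | apply pow_nonzero; exact hE |].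
  field; auto. Qed.
Lemma vB_y (ca sa cg sg P S c : R) : ca^2+sa^2=1 -> ca*sg - sa*cg <> 0 ->
  ((-sa*S - cg*c)*(ca*sg - sa*cg) - (ca*S - cg*P)*(-sa*sg-ca*cg))/(ca*sg - sa*cg)^2
  = cg * ((S - c*(ca*sg - sa*cg) - P*(cg*ca+sg*sa))/(ca*sg - sa*cg)^2).
Proof. intros h hE. apply (pyth_fix _ _ (-S*cg) ((ca*sg - sa*cg)^2) (ca^2+sa^2)); [exact h | apply pow_nonzero; exact hE |].
  field; auto. Qed.
Lemma side_a (ca sa cb sb ox oy r : R) : ca^2+sa^2=1 -> cb^2+sb^2=1 -> cb*sa - sb*ca <> 0 ->
  (((ca*oy - sa*ox)*(cb*sa - sb*ca) + (ox*cb+oy*sb + r) - (ox*ca+oy*sa - r)*(cb*ca+sb*sa))/(cb*sa - sb*ca)^2)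
   * (1 - (cb*ca+sb*sa)) = r.
Proof. intros ha hb hE.
  assert (H1 : (ca*oy - sa*ox)*(cb*sa - sb*ca) + (ox*cb+oy*sb + r) - (ox*ca+oy*sa - r)*(cb*ca+sb*sa)
     = r*(1+(cb*ca+sb*sa)) + (ox*cb+oy*sb)*(1-(ca^2+sa^2))) by ring.
  assert (H2 : (cb*sa - sb*ca)^2 = (1-(cb*ca+sb*sa))*(1+(cb*ca+sb*sa)) - (1 - (ca^2+sa^2)*(cb^2+sb^2))) by ring.
  rewrite ha in H1, H2. rewrite hb in H2. rewrite H1.
  assert (H3 : (1-(cb*ca+sb*sa))*(1+(cb*ca+sb*sa)) <> 0).
  { intro Z. apply hE. assert (Hz : (cb*sa - sb*ca)^2 = 0) by (rewrite H2, Z; ring). nra. }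
  replace ((cb*sa - sb*ca)^2) with ((1-(cb*ca+sb*sa))*(1+(cb*ca+sb*sa))) by (rewrite H2; ring).
  field. split; intro Z; apply H3; rewrite Z; ring.
Qed.
Lemma pyth al : cos al ^2 + sin al ^2 = 1.
Proof. pose proof (sin2_cos2 al). unfold Rsqr in H. lra. Qed.

Ltac vfin L := eapply is_derive_val; [auto_derive; [rewrite Rplus_0_r; assumption | reflexivity] |];
  rewrite !Rplus_0_r; rewrite <- L; [match goal with |- ?a = ?b => change (@eq R a b) end; field; assumption | apply pyth | assumption].

Lemma dXB (al sg cg P S c : R): cos al * sg - sin al * cg <> 0 ->
 is_derive (fun t => ((P + t*c) * sg - S * sin (al + t)) / (cos (al + t) * sg - sin (al + t) * cg)) 0
   (-sg * ((S - c*(cos al*sg - sin al*cg) - P*(cg*cos al+sg*sin al))/(cos al*sg - sin al*cg)^2)).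
Proof. intros hD. eapply is_derive_val; [auto_derive; [rewrite Rplus_0_r; assumption | reflexivity] |]. rewrite !Rplus_0_r. rewrite <- vB_x. match goal with |- ?a = ?b => change (@eq R a b) end. field. exact hD. apply pyth. exact hD. Qed.
Lemma dYB (al sg cg P S c : R): cos al * sg - sin al * cg <> 0 ->
 is_derive (fun t => (cos (al + t) * S - cg * (P + t*c)) / (cos (al + t) * sg - sin (al + t) * cg)) 0
   (cg * ((S - c*(cos al*sg - sin al*cg) - P*(cg*cos al+sg*sin al))/(cos al*sg - sin al*cg)^2)).
Proof. intros hD. vfin vB_y. Qed.
Lemma dXA (al sb cb P Q c : R): cb * sin al - sb * cos al <> 0 ->
 is_derive (fun t => (Q * sin (al + t) - (P + t*c) * sb) / (cb * sin (al + t) - sb * cos (al + t))) 0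
   (-sb * ((c*(cb*sin al - sb*cos al) + Q - P*(cb*cos al+sb*sin al))/(cb*sin al - sb*cos al)^2)).
Proof. intros hD. vfin vA_x. Qed.
Lemma dYA (al sb cb P Q c : R): cb * sin al - sb * cos al <> 0 ->
 is_derive (fun t => (cb * (P + t*c) - cos (al + t) * Q) / (cb * sin (al + t) - sb * cos (al + t))) 0
   (cb * ((c*(cb*sin al - sb*cos al) + Q - P*(cb*cos al+sb*sin al))/(cb*sin al - sb*cos al)^2)).
Proof. intros hD. vfin vA_y. Qed.
Lemma sin_2kpi d m : sin (d + 2*PI*IZR m) = sin d.
Proof. destruct m as [|q|q].
  - simpl. rewrite Rmult_0_r, Rplus_0_r. reflexivity.
  - rewrite <- (positive_nat_Z q), <- INR_IZR_INZ.
    replace (2*PI*INR (Pos.to_nat q)) with (2 * INR (Pos.to_nat q) * PI) by ring.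
    apply sin_period.
  - replace (IZR (Z.neg q)) with (- IZR (Z.pos q)) by (rewrite <- Pos2Z.opp_pos, opp_IZR; reflexivity).
    rewrite <- (positive_nat_Z q), <- INR_IZR_INZ.
    set (x := d + 2 * PI * - INR (Pos.to_nat q)).
    replace d with (x + 2 * INR (Pos.to_nat q) * PI) by (unfold x; ring).
    symmetry; apply sin_period.
Qed.

Lemma side_a' (ca sa cb sb ox oy r P Q c : R) : ca^2+sa^2=1 -> cb^2+sb^2=1 -> cb*sa - sb*ca <> 0 ->
  P = ox*ca+oy*sa - r -> Q = ox*cb+oy*sb + r -> c = ca*oy - sa*ox ->
  ((c*(cb*sa - sb*ca) + Q - P*(cb*ca+sb*sa))/(cb*sa - sb*ca)^2) * (1 - (cb*ca+sb*sa)) = r.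
Proof. intros ha hb hE -> -> ->. apply side_a; auto. Qed.

Lemma side_b' (ca sa cg sg ox oy r P S c : R) : ca^2+sa^2=1 -> cg^2+sg^2=1 -> ca*sg - sa*cg <> 0 ->
  P = ox*ca+oy*sa - r -> S = ox*cg+oy*sg + r -> c = ca*oy - sa*ox ->
  ((S - c*(ca*sg - sa*cg) - P*(cg*ca+sg*sa))/(ca*sg - sa*cg)^2) * (1 - (cg*ca+sg*sa)) = r.
Proof. intros ha hg hD HP HS Hc.
  assert (hE : cg*sa - sg*ca <> 0) by (intro Z; apply hD; lra).
  rewrite <- (side_a' ca sa cg sg ox oy r P S c ha hg hE HP HS Hc). field. split; auto. Qed.

Lemma combine (ca sa cb sb cg sg a1 b1 r : R): cb^2+sb^2=1 -> cg^2+sg^2=1 ->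
  a1*(1-(cb*ca+sb*sa)) = r -> b1*(1-(cg*ca+sg*sa)) = r ->
  -sb*(-sb*a1 - 0) + cb*(cb*a1 - 0) + (-sa*(-sg*b1 - -sb*a1) + ca*(cg*b1 - cb*a1))
   + (-sg*(0 - -sg*b1) + cg*(0 - cg*b1)) = 0.
Proof. intros hb hg ha hbb.
  replace (-sb*(-sb*a1 - 0) + cb*(cb*a1 - 0) + (-sa*(-sg*b1 - -sb*a1) + ca*(cg*b1 - cb*a1))
   + (-sg*(0 - -sg*b1) + cg*(0 - cg*b1))) with
   (a1*(1-(cb*ca+sb*sa)) - b1*(1-(cg*ca+sg*sa)) + a1*(cb^2+sb^2-1) - b1*(cg^2+sg^2-1)) by ring.
  rewrite ha, hbb, hb, hg. ring. Qed.

Lemma bump0 (f : nat -> R) i : bump f i 0 = f.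
Proof. apply functional_extensionality; intro j; unfold bump. destruct (Nat.eqb j i); ring. Qed.

Lemma on_line n a p k : vdet n a k <> 0 ->
  vx n a p k * cos (a k) + vy n a p k * sin (a k) = p k /\
  vx n a p k * cos (a (nxt n k)) + vy n a p k * sin (a (nxt n k)) = p (nxt n k).
Proof. intros h. unfold vx, vy. unfold vdet in *. split; field; auto. Qed.

Lemma diff_tau n a p j : (j < n)%nat -> vdet n a j <> 0 -> vdet n a (prv n j) <> 0 ->
  vx n a p j - vx n a p (prv n j) = - signed_side n a p j * sin (a j) /\
  vy n a p j - vy n a p (prv n j) = signed_side n a p j * cos (a j).
Proof. intros hj h1 h2. destruct (on_line n a p j h1) as [e1 _].
  destruct (on_line n a p (prv n j) h2) as [_ e2]. rewrite nxt_prv in e2 by auto.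
  pose proof (pyth (a j)) as hp. unfold signed_side.
  set (X1 := vx n a p j) in *. set (X2 := vx n a p (prv n j)) in *.
  set (Y1 := vy n a p j) in *. set (Y2 := vy n a p (prv n j)) in *.
  set (c := cos (a j)) in *. set (s := sin (a j)) in *.
  split; apply Rminus_diag_uniq.
  - replace (X1 - X2 - - ((X1 - X2) * - s + (Y1 - Y2) * c) * s) with
      (c*((X1*c+Y1*s) - (X2*c+Y2*s)) + (X1-X2)*(1-(c^2+s^2))) by ring.
    rewrite e1, e2, hp. ring.
  - replace (Y1 - Y2 - ((X1 - X2) * - s + (Y1 - Y2) * c) * c) with
      (s*((X1*c+Y1*s) - (X2*c+Y2*s)) + (Y1-Y2)*(1-(c^2+s^2))) by ring.
    rewrite e1, e2, hp. ring. Qed.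

Definition W (i pi : nat) (vb va : R) (k : nat) : R :=
  if Nat.eqb k i then vb else if Nat.eqb k pi then va else 0.
Lemma W_i i pi vb va : W i pi vb va i = vb.
Proof. unfold W. rewrite Nat.eqb_refl. reflexivity. Qed.
Lemma W_pi i pi vb va : pi <> i -> W i pi vb va pi = va.
Proof. intros h. unfold W. rewrite Nat.eqb_refl. destruct (Nat.eqb_spec pi i); [lia|reflexivity]. Qed.
Lemma W_o i pi vb va k : k <> i -> k <> pi -> W i pi vb va k = 0.
Proof. intros h1 h2. unfold W. destruct (Nat.eqb_spec k i); [lia|]. destruct (Nat.eqb_spec k pi); [lia|reflexivity]. Qed.

Theorem mainTheorem7 (n : nat) (hn : (3 <= n)%nat) (a p : nat -> R)
  (hP : is_convex_ngon n a p) (i : nat) (hi : (i < n)%nat) (cx cy : R)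
  (hC : is_tangency_point n a p i cx cy) :
  is_derive (fun t : R => perimeter n (bump a i t) (bump p i (t * xi_coef a i cx cy))) 0 0.
Proof.
  destruct hP as [[d [Hd _]] Hside].
  assert (Hdet : forall k, (k < n)%nat -> 0 < vdet n a k).
  { intros k hk. destruct (Hd k hk) as [[h1 h2] [m hm]].
    unfold vdet. replace (cos (a k) * sin (a (nxt n k)) - sin (a k) * cos (a (nxt n k)))
      with (sin (a (nxt n k) - a k)) by (rewrite sin_minus; ring).
    rewrite hm, sin_2kpi. apply sin_gt_0; lra. }
  set (c := xi_coef a i cx cy).
  destruct hC as [ox [oy [r [hr [h1 [h2 [h3 [hcx hcy]]]]]]]].
  assert (Hc : c = cos (a i) * oy - sin (a i) * ox) by (unfold c, xi_coef; rewrite hcx, hcy; ring).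
  set (pi := prv n i). set (ni := nxt n i).
  assert (hpi : (pi < n)%nat) by (apply prv_lt; auto).
  assert (hni : (ni < n)%nat) by (apply nxt_lt; auto).
  assert (npi : nxt n pi = i) by (apply nxt_prv; auto).
  assert (pni : prv n ni = i) by (apply prv_nxt; auto).
  assert (d1 : pi <> i) by (intro E; apply (nxt_neq n pi); [lia|auto|congruence]).
  assert (d2 : ni <> i) by (apply nxt_neq; [lia|auto]).
  assert (d3 : pi <> ni) by (intro E; apply (nxt_nxt_neq n pi); [lia|auto|]; rewrite npi; fold ni; congruence).
  assert (HP : p i = ox * cos (a i) + oy * sin (a i) - r) by (unfold sdist in h1; lra).
  assert (HQ : p pi = ox * cos (a pi) + oy * sin (a pi) + r) by (unfold sdist in h2; fold pi in h2; lra).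
  assert (HS : p ni = ox * cos (a ni) + oy * sin (a ni) + r) by (unfold sdist in h3; fold ni in h3; lra).
  assert (DA : cos (a pi) * sin (a i) - sin (a pi) * cos (a i) <> 0).
  { pose proof (Hdet pi hpi) as H. unfold vdet in H. rewrite npi in H. lra. }
  assert (DB : cos (a i) * sin (a ni) - sin (a i) * cos (a ni) <> 0).
  { pose proof (Hdet i hi) as H. unfold vdet in H. fold ni in H. lra. }
  set (a1 := (c*(cos (a pi)*sin (a i) - sin (a pi)*cos (a i)) + p pi - p i*(cos (a pi)*cos (a i)+sin (a pi)*sin (a i)))/(cos (a pi)*sin (a i) - sin (a pi)*cos (a i))^2).
  set (b1 := (p ni - c*(cos (a i)*sin (a ni) - sin (a i)*cos (a ni)) - p i*(cos (a ni)*cos (a i)+sin (a ni)*sin (a i)))/(cos (a i)*sin (a ni) - sin (a i)*cos (a ni))^2).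
  set (WX := W i pi (- sin (a ni) * b1) (- sin (a pi) * a1)).
  set (WY := W i pi (cos (a ni) * b1) (cos (a pi) * a1)).
  assert (VX : forall k, (k < n)%nat -> is_derive (fun t => vx n (bump a i t) (bump p i (t * c)) k) 0 (WX k)).
  { intros k hk. destruct (Nat.eq_dec k i) as [->|ki].
    - unfold WX; rewrite W_i.
      apply (is_derive_ext (fun t => ((p i + t*c) * sin (a ni) - p ni * sin (a i + t)) / (cos (a i + t) * sin (a ni) - sin (a i + t) * cos (a ni)))).
      + intro t. unfold vx, vdet, bump. fold ni. rewrite Nat.eqb_refl.
        destruct (Nat.eqb_spec ni i); [lia|]. reflexivity.
      + apply dXB; auto.
    - destruct (Nat.eq_dec k pi) as [->|kpi].
      + unfold WX; rewrite W_pi by auto.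
        apply (is_derive_ext (fun t => (p pi * sin (a i + t) - (p i + t*c) * sin (a pi)) / (cos (a pi) * sin (a i + t) - sin (a pi) * cos (a i + t)))).
        * intro t. unfold vx, vdet, bump. rewrite npi, Nat.eqb_refl.
          destruct (Nat.eqb_spec pi i); [lia|]. reflexivity.
        * apply dXA; auto.
      + unfold WX; rewrite W_o by auto.
        assert (nk : nxt n k <> i) by (intro E; apply kpi; apply (nxt_inj n); auto; congruence).
        apply (is_derive_ext (fun _ => vx n a p k)).
        * intro t. unfold vx, vdet, bump. destruct (Nat.eqb_spec k i); [lia|].
          destruct (Nat.eqb_spec (nxt n k) i); [lia|]. reflexivity.
        * exact (@is_derive_const R_AbsRing R_NormedModule _ 0). }
  assert (VY : forall k, (k < n)%nat -> is_derive (fun t => vy n (bump a i t) (bump p i (t * c)) k) 0 (WY k)).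
  { intros k hk. destruct (Nat.eq_dec k i) as [->|ki].
    - unfold WY; rewrite W_i.
      apply (is_derive_ext (fun t => (cos (a i + t) * p ni - cos (a ni) * (p i + t*c)) / (cos (a i + t) * sin (a ni) - sin (a i + t) * cos (a ni)))).
      + intro t. unfold vy, vdet, bump. fold ni. rewrite Nat.eqb_refl.
        destruct (Nat.eqb_spec ni i); [lia|]. reflexivity.
      + apply dYB; auto.
    - destruct (Nat.eq_dec k pi) as [->|kpi].
      + unfold WY; rewrite W_pi by auto.
        apply (is_derive_ext (fun t => (cos (a pi) * (p i + t*c) - cos (a i + t) * p pi) / (cos (a pi) * sin (a i + t) - sin (a pi) * cos (a i + t)))).
        * intro t. unfold vy, vdet, bump. rewrite npi, Nat.eqb_refl.
          destruct (Nat.eqb_spec pi i); [lia|]. reflexivity.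
        * apply dYA; auto.
      + unfold WY; rewrite W_o by auto.
        assert (nk : nxt n k <> i) by (intro E; apply kpi; apply (nxt_inj n); auto; congruence).
        apply (is_derive_ext (fun _ => vy n a p k)).
        * intro t. unfold vy, vdet, bump. destruct (Nat.eqb_spec k i); [lia|].
          destruct (Nat.eqb_spec (nxt n k) i); [lia|]. reflexivity.
        * exact (@is_derive_const R_AbsRing R_NormedModule _ 0). }
  assert (SD : forall j, (j < n)%nat -> is_derive (fun t => side_length n (bump a i t) (bump p i (t * c)) j) 0
     (- sin (a j) * (WX j - WX (prv n j)) + cos (a j) * (WY j - WY (prv n j)))).
  { intros j hj. unfold side_length.
    assert (hpj : (prv n j < n)%nat) by (apply prv_lt; auto).
    assert (hv1 : vdet n a j <> 0) by (pose proof (Hdet j hj); lra).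
    assert (hv2 : vdet n a (prv n j) <> 0) by (pose proof (Hdet _ hpj); lra).
    destruct (diff_tau n a p j hj hv1 hv2) as [ex ey].
    apply (side_deriv (fun t => vx n (bump a i t) (bump p i (t * c)) j)
                      (fun t => vy n (bump a i t) (bump p i (t * c)) j)
                      (fun t => vx n (bump a i t) (bump p i (t * c)) (prv n j))
                      (fun t => vy n (bump a i t) (bump p i (t * c)) (prv n j))
                      _ _ _ _ (a j) (signed_side n a p j)); auto.
    - cbv beta. rewrite Rmult_0_l, !bump0. exact ex.
    - cbv beta. rewrite Rmult_0_l, !bump0. exact ey. }
  unfold perimeter.
  eapply is_derive_val.
  { apply (is_derive_sumR n (fun t j => side_length n (bump a i t) (bump p i (t * c)) j)). exact SD. }
  rewrite (sumR_three n _ pi i ni hpi hi hni d1 d3 (not_eq_sym d2)).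
  - change (prv n i) with pi. rewrite pni.
    assert (pp1 : prv n pi <> i) by (intro E; apply d3; rewrite <- (nxt_prv n pi hpi), E; reflexivity).
    assert (pp2 : prv n pi <> pi) by (intro E; apply d1; apply (prv_inj n); auto).
    unfold WX, WY. rewrite !W_i, !W_pi, !(W_o _ _ _ _ (prv n pi)), !(W_o _ _ _ _ ni) by auto.
    apply (combine _ _ _ _ _ _ a1 b1 r).
    + apply pyth.
    + apply pyth.
    + unfold a1. apply (side_a' _ _ _ _ ox oy r); auto; apply pyth.
    + unfold b1. apply (side_b' _ _ _ _ ox oy r); auto; apply pyth.
  - intros j hj e1 e2 e3. unfold WX, WY.
    assert (q1 : prv n j <> i) by (intro E; apply e3; rewrite <- (nxt_prv n j hj), E; reflexivity).
    assert (q2 : prv n j <> pi) by (intro E; apply e2; apply (prv_inj n); auto).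
    rewrite !(W_o _ _ _ _ j), !(W_o _ _ _ _ (prv n j)) by auto. ring.
Qed.
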